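(* Let $\mathcal M=(M,<,+,0,\ldots)$ be a definably complete expansion of an ordered group. Let $C\subseteq M^m$ and $P$ be definable sets with $C$ closed and bounded, and let $f:C\times P\to M$ be a definable function. Then $f$ is equi-continuous with respect to $P$ if and only if it is uniformly equi-continuous with respect to $P$.
   Context: ''Definable'' means definable in $\mathcal M$ with parameters; $(M,<)$ is dense without endpoints. Definably complete: every definable subset of $M$ has sup and inf in $M\cup\{\pm\infty\}$. For $x\in M^m$, $|x|$ denotes $\max_i|x_i|$. $f$ is equi-continuous with respect to $P$ if for all $\varepsilon>0$ and $x\in C$ there is $\delta>0$ such that for all $p\in P$ and $x'\in C$, $|x-x'|<\delta$ implies $|f(x,p)-f(x',p)|<\varepsilon$. It is uniformly equi-continuous with respect to $P$ if for all $\varepsilon>0$ there is $\delta>0$ such that for all $p\in P$ and $x,x'\in C$, $|x-x'|<\delta$ implies $|f(x,p)-f(x',p)|<\varepsilon$. *)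

(* Defs.v *)
From mathcomp Require Import all_boot all_order all_algebra.
Set Implicit Arguments. Unset Strict Implicit. Unset Printing Implicit Defensive.
Import GRing.Theory.
Local Open Scope ring_scope.

(* An ordered abelian group (written additively) on the zmodType M with strict
   order [lt]; (M,<) is dense without endpoints (standing assumption). *)
Record ordered_group (M : zmodType) (lt : rel M) : Prop := {
  og_irr : forall x, ~~ lt x x;
  og_trans : forall x y z, lt x y -> lt y z -> lt x z;
  og_total : forall x y, [|| lt x y, x == y | lt y x];
  og_add : forall x y z, lt x y -> lt (x + z) (y + z);
  og_dense : forall x y, lt x y -> exists z, lt x z && lt z y;
  og_noright : forall x, exists y, lt x y;
  og_noleft : forall x, exists y, lt y x
}.

(* Points of M^n are lists of length n.  A family [def] of subsets of M^n
   (n : nat) is the family of sets definable with parameters in an expansion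
   of (M,<,+,0) (van den Dries' notion of a structure on M, with all points
   and the graphs of <, + definable). *)
Record expansion (M : zmodType) (lt : rel M)
    (def : nat -> (seq M -> Prop) -> Prop) : Prop := {
  ex_size : forall n A, def n A -> forall s, A s -> size s = n;
  ex_full : forall n, def n (fun s => size s = n);
  ex_compl : forall n A, def n A -> def n (fun s => size s = n /\ ~ A s);
  ex_inter : forall n A B, def n A -> def n B -> def n (fun s => A s /\ B s);
  ex_prodl : forall n A, def n A -> def n.+1 (fun s => exists x t, s = x :: t /\ A t);
  ex_prodr : forall n A, def n A -> def n.+1 (fun s => exists x t, s = rcons t x /\ A t);
  ex_diag : forall n i j, (i < n)%N -> (j < n)%N ->
      def n (fun s => size s = n /\ nth 0 s i = nth 0 s j);
  ex_proj : forall n A, def n.+1 A -> def n (fun t => exists x, A (rcons t x));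
  ex_point : forall a, def 1 (fun s => s = [:: a]);
  ex_lt : def 2 (fun s => exists x y, s = [:: x; y] /\ lt x y);
  ex_add : def 3 (fun s => exists x y, s = [:: x; y; x + y])
}.

Definition le_of (M : zmodType) (lt : rel M) (x y : M) := lt x y || (x == y).

Definition is_sup_ext (M : zmodType) (lt : rel M) (A : M -> Prop) : Prop :=
  (* sup = +oo *) (forall b, exists a, A a /\ ~~ le_of lt a b)
  \/ (* sup = -oo *) (forall a, ~ A a)
  \/ (* sup in M *) (exists s, (forall a, A a -> le_of lt a s) /\
                       (forall b, (forall a, A a -> le_of lt a b) -> le_of lt s b)).

Definition is_inf_ext (M : zmodType) (lt : rel M) (A : M -> Prop) : Prop :=
  (forall b, exists a, A a /\ ~~ le_of lt b a)
  \/ (forall a, ~ A a)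
  \/ (exists s, (forall a, A a -> le_of lt s a) /\
                 (forall b, (forall a, A a -> le_of lt b a) -> le_of lt b s)).

Definition definably_complete (M : zmodType) (lt : rel M)
    (def : nat -> (seq M -> Prop) -> Prop) : Prop :=
  forall A : seq M -> Prop, def 1 A ->
    is_sup_ext lt (fun x => A [:: x]) /\ is_inf_ext lt (fun x => A [:: x]).

Definition gabs (M : zmodType) (lt : rel M) (x : M) : M :=
  if lt x 0 then - x else x.
Definition gmax (M : zmodType) (lt : rel M) (a b : M) : M :=
  if lt a b then b else a.
Definition tnorm (M : zmodType) (lt : rel M) (s : seq M) : M :=
  foldr (fun a acc => gmax lt (gabs lt a) acc) 0 s.
Definition tsub (M : zmodType) (x y : seq M) : seq M :=
  [seq a.1 - a.2 | a <- zip x y].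

Definition closed_set (M : zmodType) (lt : rel M) (m : nat) (C : seq M -> Prop) :=
  forall y, size y = m -> ~ C y ->
    exists e, lt 0 e /\ forall z, size z = m -> lt (tnorm lt (tsub y z)) e -> ~ C z.

Definition bounded_set (M : zmodType) (lt : rel M) (C : seq M -> Prop) :=
  exists B, forall x, C x -> le_of lt (tnorm lt x) B.

Definition equi_continuous (M : zmodType) (lt : rel M) (C P : seq M -> Prop)
    (f : seq M -> seq M -> M) :=
  forall e, lt 0 e -> forall x, C x -> exists d, lt 0 d /\
    forall p x', P p -> C x' -> lt (tnorm lt (tsub x x')) d ->
      lt (gabs lt (f x p - f x' p)) e.

Definition uniformly_equi_continuous (M : zmodType) (lt : rel M) (C P : seq M -> Prop)
    (f : seq M -> seq M -> M) :=
  forall e, lt 0 e -> exists d, lt 0 d /\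
    forall p x x', P p -> C x -> C x' -> lt (tnorm lt (tsub x x')) d ->
      lt (gabs lt (f x p - f x' p)) e.

(* Main.v *)
Set Warnings "-notation-overridden,-ambiguous-paths".
Require Import Defs.
From mathcomp Require Import all_boot all_order all_algebra zify.
From Stdlib Require Import Classical FunctionalExtensionality PropExtensionality.
Set Implicit Arguments. Unset Strict Implicit. Unset Printing Implicit Defensive.
Import GRing.Theory.
Local Open Scope ring_scope.



Section OG.
Variables (M : zmodType) (lt : rel M) (hog : ordered_group lt).

Lemma lt_irr x : ~~ lt x x. Proof. exact: (og_irr hog). Qed.
Lemma lt_trans x y z : lt x y -> lt y z -> lt x z. Proof. exact: (og_trans hog). Qed.
Lemma lt_asym x y : lt x y -> ~~ lt y x.
Proof. move=> h; apply/negP => h2; by move: (lt_irr x); rewrite (lt_trans h h2). Qed.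
Lemma lt_total x y : [\/ lt x y, x = y | lt y x].
Proof. by case/or3P: (og_total hog x y) => [|/eqP|]; [constructor 1|constructor 2|constructor 3]. Qed.
Lemma nlt_lt x y : ~~ lt x y -> x <> y -> lt y x.
Proof. by move=> h1 h2; case: (lt_total x y) => // h; rewrite h in h1. Qed.
Lemma lt_le_trans x y z : lt x y -> ~~ lt z y -> lt x z.
Proof.
move=> h1 h2; case: (lt_total y z) => [h|<-//|h]; first exact: lt_trans h1 h.
by rewrite h in h2.
Qed.
Lemma le_lt_trans x y z : ~~ lt y x -> lt y z -> lt x z.
Proof.
move=> h1 h2; case: (lt_total x y) => [h|->//|h]; first exact: lt_trans h h2.
by rewrite h in h1.
Qed.
Lemma le_trans x y z : ~~ lt y x -> ~~ lt z y -> ~~ lt z x.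
Proof.
move=> h1 h2; apply/negP => h3.
case: (lt_total x y) => [h|e|h]; last by rewrite h in h1.
  by rewrite (lt_trans h3 h) in h2.
by subst; rewrite h3 in h2.
Qed.
Lemma ltW x y : lt x y -> ~~ lt y x. Proof. exact: lt_asym. Qed.
Lemma le_refl x : ~~ lt x x. Proof. exact: lt_irr. Qed.

Lemma ltD2r x y z : lt (x + z) (y + z) = lt x y.
Proof.
apply/idP/idP; last exact: og_add.
by move=> /(og_add hog (- z)); rewrite !addrK.
Qed.
Lemma ltD2l x y z : lt (z + x) (z + y) = lt x y.
Proof. by rewrite ![z + _]addrC ltD2r. Qed.
Lemma ltDD a b c d : lt a b -> lt c d -> lt (a + c) (b + d).
Proof.
move=> h1 h2; apply: (@lt_trans _ (b + c)); first by rewrite ltD2r.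
by rewrite ltD2l.
Qed.
Lemma ltDpos x r : lt 0 r -> lt x (x + r).
Proof. by move=> h; rewrite -{1}(addr0 x) ltD2l. Qed.
Lemma lt_subl a b c : lt (a - b) c = lt a (b + c).
Proof. by rewrite -(ltD2r _ _ b) subrK addrC. Qed.
Lemma lt_subr a b c : lt c (a - b) = lt (b + c) a.
Proof. by rewrite -(ltD2r _ _ b) subrK addrC. Qed.

Lemma gabs_lt a b r : lt (gabs lt (a - b)) r <-> lt a (b + r) /\ lt b (a + r).
Proof.
rewrite /gabs; case: ifP => h.
  rewrite opprB lt_subl; move: h; rewrite lt_subl addr0 => h.
  split; last by case.
  move=> h2; split => //.
  have r0 : lt 0 r by move: (lt_trans h h2); rewrite -{1}(addr0 a) ltD2l.
  exact: lt_trans h (ltDpos b r0).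
rewrite lt_subl; move: h; rewrite lt_subl addr0 => h.
split; last by case.
move=> h2; split => //.
have r0 : lt 0 r.
  have := le_lt_trans (negbT h) h2; by rewrite -{1}(addr0 b) ltD2l.
exact: le_lt_trans (negbT h) (ltDpos a r0).
Qed.

Lemma gabs_sym a b r : lt (gabs lt (a - b)) r -> lt (gabs lt (b - a)) r.
Proof. by rewrite !gabs_lt => -[]. Qed.

Lemma gabs_tri a b c r1 r2 : lt (gabs lt (a - b)) r1 -> lt (gabs lt (b - c)) r2 ->
  lt (gabs lt (a - c)) (r1 + r2).
Proof.
rewrite !gabs_lt => -[h1 h2] [h3 h4]; split.
  have e : (b + r1) + (c + r2) = b + (c + (r1 + r2)).
    by rewrite -!addrA; congr (_ + _); rewrite addrCA.
  by have := ltDD h1 h3; rewrite e (addrC a) ltD2l.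
have e : (b + r2) + (a + r1) = b + (a + (r1 + r2)).
  by rewrite -!addrA; congr (_ + _); rewrite addrCA (addrC r2).
by have := ltDD h4 h2; rewrite e (addrC c) ltD2l.
Qed.

Lemma gabs_le_r a b r r' : lt (gabs lt (a - b)) r -> ~~ lt r' r -> lt (gabs lt (a - b)) r'.
Proof. by move=> h1 h2; exact: lt_le_trans h1 h2. Qed.

Lemma ltNr x y : lt x (- y) = lt y (- x).
Proof.
rewrite -(ltD2r x (-y) y) -(ltD2r y (-x) x) !addNr addrC //.
Qed.

Lemma gabs_bound t B : ~~ lt B (gabs lt t) -> ~~ lt B t /\ ~~ lt t (- B).
Proof.
rewrite /gabs; case: ifP => h h2.
  have h0 : lt 0 (- t) by rewrite ltNr oppr0.
  split; last by rewrite ltNr.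
  apply/negP => h3; move: (lt_trans h3 h) => h4.
  by move: h2; rewrite (lt_trans h4 h0).
split => //.
apply/negP => h3.
have h4 : lt B (- t) by rewrite -ltNr.
have h5 : ~~ lt 0 (- t) by rewrite ltNr oppr0 h.
have h6 : lt B 0 := lt_le_trans h4 h5.
have h7 : ~~ lt t 0 by rewrite h.
by rewrite (le_lt_trans h2 h6) in h7.
Qed.


Lemma gmax_lt a b d : lt (gmax lt a b) d <-> lt a d /\ lt b d.
Proof.
rewrite /gmax; case: ifP => h; split => [h2|[]//].
  by split => //; exact: lt_trans h h2.
by split => //; exact: le_lt_trans (negbT h) h2.
Qed.

Lemma gmax_gel a b : ~~ lt (gmax lt a b) a.
Proof. by rewrite /gmax; case: ifP => h; [exact: lt_asym | exact: lt_irr]. Qed.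
Lemma gmax_ger a b : ~~ lt (gmax lt a b) b.
Proof. by rewrite /gmax; case: ifP => h; [exact: lt_irr | rewrite h]. Qed.

Lemma tnorm_lt x d : lt (tnorm lt x) d <->
  lt 0 d /\ forall i, (i < size x)%N -> lt (gabs lt (nth 0 x i)) d.
Proof.
elim: x => [|a x IH] /=; first by split => [h|[]//]; split.
rewrite gmax_lt IH; split.
  move=> [h1 [h2 h3]]; split => // -[|i] //= hi; exact: h3.
move=> [h1 h2]; split; first exact: (h2 0%N).
by split => // i hi; exact: (h2 i.+1).
Qed.

Lemma tnorm_ge x i : (i < size x)%N -> ~~ lt (tnorm lt x) (gabs lt (nth 0 x i)).
Proof.
elim: x i => [|a x IH] [|i] //= hi; first exact: gmax_gel.
exact: le_trans (IH i hi) (gmax_ger _ _).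
Qed.

Lemma size_tsub (x y : seq M) : size (tsub x y) = minn (size x) (size y).
Proof. by rewrite /tsub size_map size_zip. Qed.

Lemma nth_tsub (x y : seq M) i : (i < size x)%N -> (i < size y)%N ->
  nth 0 (tsub x y) i = nth 0 x i - nth 0 y i.
Proof.
move=> h1 h2; rewrite /tsub (nth_map (0, 0)); last by rewrite size_zip leq_min h1.
by rewrite nth_zip_cond size_zip leq_min h1 h2.
Qed.

Lemma tnorm_tsub_lt (x y : seq M) d : size x = size y ->
  lt (tnorm lt (tsub x y)) d <->
  lt 0 d /\ forall i, (i < size x)%N -> lt (gabs lt (nth 0 x i - nth 0 y i)) d.
Proof.
move=> hs; rewrite tnorm_lt size_tsub hs minnn; split => -[h1 h2]; split => // i hi.
  have hx : (i < size x)%N by rewrite hs.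
  by rewrite -(@nth_tsub x y i) //; exact: h2.
have hy : (i < size x)%N by rewrite hs.
by rewrite (@nth_tsub x y i) //; exact: h2.
Qed.

Lemma half_pos e : lt 0 e -> exists e', lt 0 e' /\ ~~ lt e (e' + e').
Proof.
move=> he; case: (og_dense hog he) => a /andP [ha1 ha2].
case: (lt_total (a + a) e) => [h|h|h].
- by exists a; split => //; exact: lt_asym.
- by exists a; split => //; rewrite h lt_irr.
exists (e - a); split; first by rewrite lt_subr addr0.
apply: lt_asym.
have -> : e - a + (e - a) = e + (e - (a + a)).
  by rewrite opprD !addrA (addrC (e - a)) addrA.
by rewrite -[X in lt _ X](addr0 e) ltD2l lt_subl addr0.
Qed.

Lemma min_pos a b : lt 0 a -> lt 0 b -> exists c, [/\ lt 0 c, ~~ lt a c & ~~ lt b c].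
Proof.
move=> ha hb; case: (boolP (lt a b)) => h.
  by exists a; split => //; [exact: lt_irr | exact: lt_asym].
by exists b; split => //; exact: lt_irr.
Qed.

Lemma le_ofE a b : le_of lt a b = ~~ lt b a.
Proof.
rewrite /le_of; case: (lt_total a b) => [h|->|h].
- by rewrite h (negbTE (lt_asym h)).
- by rewrite eqxx lt_irr orbT.
- rewrite (negbTE (lt_asym h)) h /=; apply/negP => /eqP e; move: h; rewrite e => h; by move: (lt_irr b); rewrite h.
Qed.

End OG.



Section Seqs.
Variable (M : zmodType).
Lemma nth_catl (a b : seq M) i : (i < size a)%N -> nth 0 (a ++ b) i = nth 0 a i.
Proof. by move=> h; rewrite nth_cat h. Qed.
Lemma nth_catr (a b : seq M) n i : size a = n -> nth 0 (a ++ b) (n + i) = nth 0 b i.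
Proof. by move=> <-; rewrite nth_cat ltnNge leq_addr /= addKn. Qed.
Lemma map_nth_mid (a b c : seq M) i j : size a = i -> size b = j ->
  map (nth 0 (a ++ b ++ c)) (iota i j) = b.
Proof.
move=> ha hb; rewrite map_nth_iota; last by rewrite !size_cat -ha addKn -hb leq_addr.
by rewrite -ha drop_size_cat // -hb take_size_cat.
Qed.
Lemma map_nth_pre (a c : seq M) j : size a = j ->
  map (nth 0 (a ++ c)) (iota 0 j) = a.
Proof. by move=> h; have := @map_nth_mid [::] a c 0 j erefl h. Qed.
End Seqs.

Section Def.
Variables (M : zmodType) (lt : rel M) (def : nat -> (seq M -> Prop) -> Prop).
Hypothesis hex : expansion lt def.

Lemma def_ext n (A B : seq M -> Prop) : def n A -> (forall s, A s <-> B s) -> def n B.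
Proof.
move=> h e; have -> : B = A; last by [].
by apply: functional_extensionality => s; apply: propositional_extensionality; rewrite e.
Qed.

Lemma def_size n A s : def n A -> A s -> size s = n.
Proof. by move=> h; exact: (ex_size hex h). Qed.

Lemma def_and n A B : def n A -> def n B -> def n (fun s => A s /\ B s).
Proof. exact: (ex_inter hex). Qed.

Lemma def_not n A : def n A -> def n (fun s => size s = n /\ ~ A s).
Proof. exact: (ex_compl hex). Qed.

Lemma def_or n A B : def n A -> def n B -> def n (fun s => A s \/ B s).
Proof.
move=> hA hB.
have h := def_not (def_and (def_not hA) (def_not hB)).
apply: (def_ext h) => s; split.
  move=> [hs hn]; apply: NNPP => hn2; apply: hn; split; split => // ?; apply: hn2; tauto.
case=> hs; (split; first exact: (def_size _ hs)); tauto.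
Qed.

Lemma def_exn n j A : def (n + j) A -> def n (fun s => exists t, size t = j /\ A (s ++ t)).
Proof.
elim: j A => [|j IH] A h.
  move: h; rewrite addn0 => h; apply: (def_ext h) => s; split.
    by move=> hs; exists [::]; rewrite cats0.
  by case=> t [/size0nil -> ]; rewrite cats0.
move: h; rewrite addnS => /(ex_proj hex) /IH h; apply: (def_ext h) => s; split.
  case=> t [ht [x hx]]; exists (rcons t x); split; first by rewrite size_rcons ht.
  by rewrite -rcons_cat.
case=> t [ht hA]; case/lastP: t ht hA => [//|t x] ht hA.
exists t; split; first by move: ht; rewrite size_rcons => -[].
by exists x; rewrite rcons_cat.
Qed.

Lemma def_prodl j n A : def n A -> def (j + n) (fun u => size u = (j + n)%N /\ A (drop j u)).
Proof.
move=> hA; elim: j => [|j IH].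
  apply: (def_ext hA) => s; rewrite drop0 add0n; split; last by case.
  by move=> h; split => //; exact: def_size h.
rewrite addSn; have h := ex_prodl hex IH; apply: (def_ext h) => s; split.
  case=> x [t [-> [ht hd]]]; split => /=; [by rewrite ht | by []].
case: s => [|x t] [//= ht hd]; exists x, t; split => //; split => //; by case: ht.
Qed.

Lemma def_bigand n N (A : nat -> seq M -> Prop) :
  (forall i, (i < N)%N -> def n (fun s => size s = n /\ A i s)) ->
  def n (fun s => size s = n /\ forall i, (i < N)%N -> A i s).
Proof.
elim: N => [|N IH] h.
  apply: (def_ext (ex_full hex n)) => s; split => // -[] //.
have h1 := def_and (IH (fun i hi => h i (ltnW hi))) (h N (ltnSn N)).
apply: (def_ext h1) => s; split.
  case=> -[hs hi] [_ hN]; split => // i; rewrite ltnS leq_eqVlt; case/orP => [/eqP -> //|]; exact: hi.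
by case=> hs hi; split; [split => // i hi2; apply: hi; exact: ltnW | split => //; exact: hi].
Qed.

Lemma def_subst n n' A (sg : seq nat) : def n A -> size sg = n -> all (fun i => i < n')%N sg ->
  def n' (fun s => size s = n' /\ A (map (nth 0 s) sg)).
Proof.
move=> hA hsg hall.
have hQ : def (n' + n) (fun u => (size u = (n' + n)%N /\ A (drop n' u)) /\
    (size u = (n' + n)%N /\ forall i, (i < n)%N -> nth 0 u (n' + i) = nth 0 u (nth 0%N sg i))).
  apply: def_and; first exact: def_prodl.
  apply: def_bigand => i hi.
  have h1 : (nth 0%N sg i < n')%N by apply: (allP hall); rewrite mem_nth // hsg.
  have hd : def (n' + n) (fun s => size s = (n' + n)%N /\ nth 0 s (n' + i) = nth 0 s (nth 0%N sg i)).
    apply: (ex_diag hex); first by rewrite ltn_add2l.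
    exact: leq_trans h1 (leq_addr _ _).
  exact: hd.

apply: (def_ext (def_exn hQ)) => s; split.
  case=> t [ht [[hs hd] [_ hi]]].
  have hs' : size s = n' by move: hs; rewrite size_cat ht => /eqP; rewrite eqn_add2r => /eqP.
  split => //; suff <- : t = map (nth 0 s) sg by rewrite -hs' drop_size_cat in hd.
  apply: (@eq_from_nth _ 0); first by rewrite size_map hsg.
  move=> i; rewrite ht => hit; rewrite (nth_map 0%N) ?hsg //.
  have := hi i hit; rewrite nth_catr // => ->.
  rewrite nth_catl // hs'; apply: (allP hall); rewrite mem_nth // hsg //.
case=> hs hA'; exists (map (nth 0 s) sg); split; first by rewrite size_map.
have hsz : size (s ++ [seq nth 0 s i | i <- sg]) = (n' + n)%N by rewrite size_cat size_map hs hsg.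
split; first by split => //; rewrite -hs drop_size_cat.
split => // i hi; rewrite nth_catr // (nth_map 0%N) ?hsg // nth_catl //.
rewrite hs; apply: (allP hall); rewrite mem_nth // hsg //.
Qed.

Lemma def_lt n i j : (i < n)%N -> (j < n)%N ->
  def n (fun s => size s = n /\ lt (nth 0 s i) (nth 0 s j)).
Proof.
move=> hi hj.
have h := def_subst (ex_lt hex) (sg := [:: i; j]) erefl.
have := h n; rewrite /= hi hj => /(_ erefl) {}h.
apply: (def_ext h) => s; split; case=> hs H; split => //.
  by case: H => x [y [[-> ->] ?]].
by exists (nth 0 s i), (nth 0 s j).
Qed.

Lemma def_ltadd n i j k : (i < n)%N -> (j < n)%N -> (k < n)%N ->
  def n (fun s => size s = n /\ lt (nth 0 s i) (nth 0 s j + nth 0 s k)).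
Proof.
move=> hi hj hk.
have h1 := def_subst (ex_add hex) (sg := [:: 1; 2; 3]%N) erefl (n' := 4) erefl.
have h2 := def_subst (ex_lt hex) (sg := [:: 0; 3]%N) erefl (n' := 4) erefl.
have h3 := ex_proj hex (def_and h1 h2).
have h4 : def 3 (fun s => size s = 3 /\ lt (nth 0 s 0) (nth 0 s 1 + nth 0 s 2)).
  apply: (def_ext h3) => s; split.
    case=> w [[hs [x [y e1]]] [_ [x' [y' [e2 hl]]]]].
    move: hs; rewrite size_rcons => -[hs]; split => //.
    case: s hs e1 e2 hl => [|a [|b [|c [|? ?]]]] //= _ e1 e2 hl.
    case: e1 => e1 e3 e4; case: e2 => e5 e6; subst; by [].
  case=> hs hl; exists (nth 0 s 1 + nth 0 s 2).
  case: s hs hl => [|a [|b [|c [|? ?]]]] //= _ hl; split.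
    by split => //; exists b, c; rewrite addrC.
  by split => //; exists a, (b + c).
have h5 := def_subst h4 (sg := [:: i; j; k]) erefl (n' := n).
rewrite /= hi hj hk in h5; have {}h5 := h5 erefl.
by apply: (def_ext h5) => s; split; [case=> hs [_ H] | case=> hs H]; split.
Qed.

Lemma def_fixc n A c : def n.+1 A -> def n (fun s => A (rcons s c)).
Proof.
move=> hA; have h1 := def_prodl n (ex_point hex c); rewrite addn1 in h1.
have h2 := ex_proj hex (def_and hA h1).
apply: (def_ext h2) => s; split.
  case=> x [hA' [hs hd]]; move: hs; rewrite size_rcons => -[hs].
  by move: hd; rewrite -cats1 -hs drop_size_cat // => -[<-].
move=> hA'; exists c; split => //.
have hs : size s = n by have := def_size hA hA'; rewrite size_rcons => -[].
by rewrite size_rcons hs -cats1 -hs drop_size_cat.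
Qed.

End Def.



Section Lim.
Variables (M : zmodType) (lt : rel M) (def : nat -> (seq M -> Prop) -> Prop).
Hypotheses (hog : ordered_group lt) (hex : expansion lt def) (hdc : definably_complete lt def).

Definition Lform (S : seq M -> Prop) (y : M) := exists d, lt 0 d /\
  forall t d', lt 0 d' -> ~~ lt d d' -> S [:: t; d'] -> ~~ lt t y.

Lemma Lform_def S : def 2 S -> exists A, def 1 A /\ forall y, A [:: y] <-> Lform S y.
Proof.
move=> hS.
have p1 := def_lt hex (n := 5) (i := 1) (j := 4) erefl erefl.
have p2 := def_not hex (def_lt hex (n := 5) (i := 2) (j := 4) erefl erefl).
have p3 := def_subst hex hS (sg := [:: 3; 4]%N) erefl (n' := 5) erefl.
have p4 := def_lt hex (n := 5) (i := 3) (j := 0) erefl erefl.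
have q3 := def_exn hex (n := 3) (j := 2) (def_and hex p1 (def_and hex p2 (def_and hex p3 p4))).
have q1 := def_and hex (def_lt hex (n := 3) (i := 1) (j := 2) erefl erefl) (def_not hex q3).
have q2 := ex_proj hex q1.
have A1 := def_fixc hex 0 q2.
eexists; split; first exact: A1.
move=> y; rewrite /Lform /=; split.
  case=> d [[_ hd] [_ hn]]; exists d; split => // t d' h1 h2 h3; apply/negP => h4.
  apply: hn; exists [:: t; d']; split => //=.
  split; first by split.
  split; first by split => //; case=> _ h; rewrite h in h2.
  by split.
case=> d [hd hL]; exists d; split => //; split => //.
case=> t [ht [[_ h1] [[_ h2] [[_ h3] [_ h4]]]]].
case: t ht h1 h2 h3 h4 => [|t [|d' [|? ?]]] //= _ h1 h2 h3 h4.
have h2' : ~~ lt d d' by apply/negP => h; apply: h2.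
by move: (hL t d' h1 h2' h3); rewrite h4.
Qed.

Lemma one_dim (S : seq M -> Prop) B : def 2 S ->
  (forall t d, S [:: t; d] -> ~~ lt B (gabs lt t)) ->
  (forall d, lt 0 d -> exists t, S [:: t; d]) ->
  exists a, forall r, lt 0 r -> forall d, lt 0 d -> exists t d',
    [/\ lt 0 d', ~~ lt d d', S [:: t; d'] & lt (gabs lt (t - a)) r].
Proof.
move=> hS hB hne.
case: (Lform_def hS) => A [hA hAL].
have eA : (fun x => A [:: x]) = Lform S.
  by apply: functional_extensionality => y; apply: propositional_extensionality.
case: (hdc hA) => hsup _; rewrite eA in hsup.
have [d1 hd1] := og_noright hog 0.
case: hsup => [hinf|[hemp|[a [hub hlub]]]].
- case: (hinf B) => y [[d [hd hL]] hy].
  case: (hne d hd) => t ht.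
  have := hL t d hd (lt_irr hog d) ht.
  have [h1 _] := gabs_bound hog (hB _ _ ht).
  rewrite le_ofE // in hy => h2.
  by move: (le_trans hog h2 h1); rewrite (negbTE hy).
- apply: False_ind; apply: (hemp (- B)); exists d1; split => // t d' h1 h2 h3.
  by have [_ h] := gabs_bound hog (hB _ _ h3).
exists a => r hr d hd.
have [y [hy hya]] : exists y, Lform S y /\ lt (a - r) y.
  apply: NNPP => hn.
  have : le_of lt a (a - r).
    apply: hlub => y hy; rewrite le_ofE //; apply/negP => h; apply: hn; by exists y.
  by rewrite le_ofE // (lt_subl hog) addrC (ltDpos hog _ hr).
case: hy => d0 [hd0 hL].
have [d2 [hd2 h2d h2d0]] := min_pos hog hd hd0.
have [t [d' [h1 h2 h3 h4]]] : exists t d', [/\ lt 0 d', ~~ lt d2 d', S [:: t; d'] & lt t (a + r)].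
  apply: NNPP => hn.
  have : le_of lt (a + r) a.
    apply: hub; exists d2; split => // t d' h1 h2 h3; apply/negP => h4.
    by apply: hn; exists t, d'; split.
  by rewrite (le_ofE hog) (ltDpos hog _ hr).
exists t, d'; split => //.
- by have := le_trans hog h2 h2d.
- apply/(gabs_lt hog); split => //.
  have := lt_le_trans hog hya (hL t d' h1 (le_trans hog h2 h2d0) h3).
  by rewrite (lt_subl hog) addrC.
Qed.

End Lim.



Section Env.
Variable M : zmodType.
Lemma envS1 (t : seq M) u d n : size t = n ->
  map (nth 0 ([:: u; d] ++ t)) (0%N :: iota 2 n ++ [:: 1%N]) = u :: t ++ [:: d].
Proof.
move=> ht; rewrite /= map_cat /=; congr (_ :: _ ++ _).
by have := @map_nth_mid _ [:: u; d] t [::] 2 n erefl ht; rewrite cats0.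
Qed.

Lemma envS2 (rest : seq M) d a z u d' n : size rest = n ->
  let E := rcons (rcons (rcons rest d) a) z ++ [:: u; d'] in
  [/\ nth 0 E (n + 0)%N = d, nth 0 E (n + 1)%N = a, nth 0 E (n + 2)%N = z,
      nth 0 E (n + 3)%N = u & nth 0 E (n + 4)%N = d'] /\
      map (nth 0 E) ((n + 3)%N :: iota 0 n ++ [:: (n + 4)%N]) = u :: rest ++ [:: d'].
Proof.
move=> hs E; have -> : E = rest ++ [:: d; a; z; u; d'] by rewrite /E -!cats1 -!catA.
rewrite !nth_catr //; split => //.
by rewrite /= map_cat /= !nth_catr // map_nth_pre.
Qed.
End Env.

Section Lim2.
Variables (M : zmodType) (lt : rel M) (def : nat -> (seq M -> Prop) -> Prop).
Hypotheses (hog : ordered_group lt) (hex : expansion lt def) (hdc : definably_complete lt def).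

Lemma limit n : forall (S : seq M -> Prop) B, def n.+1 S ->
  (forall x d, S (rcons x d) -> forall i, (i < n)%N -> ~~ lt B (gabs lt (nth 0 x i))) ->
  (forall d, lt 0 d -> exists x, S (rcons x d)) ->
  exists z, size z = n /\ forall r, lt 0 r -> forall d, lt 0 d -> exists x d',
   [/\ lt 0 d', ~~ lt d d', S (rcons x d') &
       forall i, (i < n)%N -> lt (gabs lt (nth 0 x i - nth 0 z i)) r].
Proof.
elim: n => [|n IH] S B hS hB hne.
  exists [::]; split => // r hr d hd; case: (hne d hd) => x hx.
  by exists x, d; split => //; exact: lt_irr.
have h1 := def_subst hex hS (sg := 0%N :: iota 2 n ++ [:: 1%N]) (n' := n.+2).
have {}h1 : def n.+2 (fun s => size s = n.+2 /\ S (map (nth 0 s) (0%N :: iota 2 n ++ [:: 1%N]))).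
  apply: h1; first by rewrite /= size_cat size_iota addn1.
  rewrite /= all_cat /=; apply/andP; split; last by [].
  by apply/allP => i; rewrite mem_iota => /andP [_ h]; lia.
have q1 := def_exn hex (n := 2) (j := n) h1.
set S1 := (fun s => exists t, _) in q1.
have hS1 : forall u d, S1 [:: u; d] <-> exists rest, size rest = n /\ S (rcons (u :: rest) d).
  move=> u d; rewrite /S1; split.
    by case=> t [ht [_ hs]]; exists t; split => //; move: hs; rewrite envS1 // rcons_cons cats1.
  case=> t [ht hs]; exists t; split => //; split; first by rewrite size_cat ht.
  by rewrite envS1 // -cat_cons cats1.
have [a ha] : exists a, forall r, lt 0 r -> forall d, lt 0 d -> exists t d',
    [/\ lt 0 d', ~~ lt d d', S1 [:: t; d'] & lt (gabs lt (t - a)) r].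
  apply: (one_dim hog hex hdc (B := B) q1).
    move=> t d /hS1 [rest [hr hs]]; exact: (hB _ _ hs 0%N).
  move=> d hd; case: (hne d hd) => x hx.
  have : size x = n.+1 by have := def_size hex hS hx; rewrite size_rcons => -[].
  case: x hx => [|u rest] // hx [hr]; exists u; apply/hS1; by exists rest.
pose N := (n.+3 + 2)%N.
have c1 : def N (fun s => size s = N /\ lt (nth 0 s (n + 2)%N) (nth 0 s (n + 4)%N)).
  by apply: (def_lt hex) => //; rewrite /N; lia.
have c2 : def N (fun s => size s = N /\ ~ (size s = N /\ lt (nth 0 s (n + 0)%N) (nth 0 s (n + 4)%N))).
  by apply: (def_not hex) => //; apply: (def_lt hex) => //; rewrite /N; lia.
have c3 : def N (fun s => size s = N /\ lt (nth 0 s (n + 3)%N) (nth 0 s (n + 1)%N + nth 0 s (n + 0)%N)).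
  by apply: (def_ltadd hex) => //; rewrite /N; lia.
have c4 : def N (fun s => size s = N /\ lt (nth 0 s (n + 1)%N) (nth 0 s (n + 3)%N + nth 0 s (n + 0)%N)).
  by apply: (def_ltadd hex) => //; rewrite /N; lia.
have c5 : def N (fun s => size s = N /\ S (map (nth 0 s) ((n + 3)%N :: iota 0 n ++ [:: (n + 4)%N]))).
  apply: (def_subst hex hS); first by rewrite /= size_cat size_iota /=; lia.
  rewrite /= all_cat /=; apply/and3P; split; [rewrite /N; lia| |rewrite /N; lia].
  by apply/allP => i; rewrite mem_iota => /andP [_ h]; rewrite /N; lia.
have q := def_exn hex (n := n.+3) (j := 2)
  (def_and hex c1 (def_and hex c2 (def_and hex c3 (def_and hex c4 c5)))).
have q2 := def_fixc hex a (def_fixc hex 0 q).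
set S2 := (fun s => _) in q2.
have hS2 : forall rest d, size rest = n -> (S2 (rcons rest d) <-> exists u d',
    [/\ lt 0 d', ~~ lt d d', lt (gabs lt (u - a)) d & S (rcons (u :: rest) d')]).
  move=> rest d hr; rewrite /S2; split.
    case=> t [ht H]; case: t ht H => [|u [|d' [|? ?]]] // _.
    have [[e0 e1 e2 e3 e4] em] := envS2 d a 0 u d' hr.
    have hsz : size (rcons (rcons (rcons rest d) a) 0 ++ [:: u; d']) = N.
      by rewrite size_cat !size_rcons hr.
    rewrite e0 e1 e2 e3 e4 em.
    case=> [[_ g1] [[_ g2] [[_ g3] [[_ g4] [_ g5]]]]].
    exists u, d'; split => //.
    - by apply/negP => h; apply: g2.
    - by apply/(gabs_lt hog); split => //; rewrite addrC.
    - by rewrite rcons_cons -cats1.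
  case=> u [d' [g1 g2 g3 g4]]; exists [:: u; d']; split => //.
  have [[e0 e1 e2 e3 e4] em] := envS2 d a 0 u d' hr.
  have hsz : size (rcons (rcons (rcons rest d) a) 0 ++ [:: u; d']) = N.
    by rewrite size_cat !size_rcons hr.
  rewrite e0 e1 e2 e3 e4 em hsz.
  move/(gabs_lt hog): g3 => [g3 g3'].
  split; first by [].
  split; first by split => // -[_ h]; rewrite h in g2.
  split; first by split => //; rewrite addrC.
  split; first by [].
  by split => //; rewrite -cat_cons cats1.
have hS2size : forall s, S2 s -> size s = n.+1 by move=> s hs; exact: (def_size hex q2 hs).
have hb2 : forall x d, S2 (rcons x d) -> forall i, (i < n)%N -> ~~ lt B (gabs lt (nth 0 x i)).
  move=> x d hx i hi.
  have hxs : size x = n by have := hS2size _ hx; rewrite size_rcons => -[].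
  case/(hS2 _ _ hxs): hx => u [d' [_ _ _ h]]; exact: (hB _ _ h i.+1).
have hn2 : forall d, lt 0 d -> exists x, S2 (rcons x d).
  move=> d hd; have [t [d' [k1 k2 k3 k4]]] := ha d hd d hd.
  case/hS1: k3 => rest [hr hs]; exists rest; apply/(hS2 _ _ hr).
  by exists t, d'; split.
have [z' [hz' hz]] := IH S2 B q2 hb2 hn2.
exists (a :: z'); split; first by rewrite /= hz'.
move=> r hr d hd.
have [d0 [hd0 hd0r hd0d]] := min_pos hog hr hd.
have [x [d'' [m1 m2 m3 m4]]] := hz r hr d0 hd0.
have hxs : size x = n by have := hS2size _ m3; rewrite size_rcons => -[].
case/(hS2 _ _ hxs): m3 => u [d' [g1 g2 g3 g4]].
exists (u :: x), d'; split => //.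
- have := le_trans hog g2 m2 => h; by have := le_trans hog h hd0d.
- case=> [|i] hi /=; last exact: m4.
  by have := lt_le_trans hog g3 (le_trans hog m2 hd0r).
Qed.

End Lim2.



Section Env2.
Variable M : zmodType.
Lemma nth_catr' (a b : seq M) n i j : size a = n -> j = (n + i)%N -> nth 0 (a ++ b) j = nth 0 b i.
Proof. by move=> h ->; exact: nth_catr. Qed.

Lemma cat_inj (a a' b b' : seq M) : size a = size a' -> a ++ b = a' ++ b' -> a = a' /\ b = b'.
Proof.
move=> hs e; split.
  by have := congr1 (take (size a)) e; rewrite take_size_cat // hs take_size_cat.
by have := congr1 (drop (size a)) e; rewrite drop_size_cat // hs drop_size_cat.
Qed.

Lemma split3 (t : seq M) k m : size t = (k + m + 2)%N ->
  exists p x' u v, [/\ size p = k, size x' = m & t = p ++ x' ++ [:: u; v]].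
Proof.
move=> ht; exists (take k t), (take m (drop k t)).
have h2 : size (drop m (drop k t)) = 2 by rewrite !size_drop ht; lia.
case e: (drop m (drop k t)) h2 => [|u [|v [|? ?]]] // _.
exists u, v; split.
- by rewrite size_take ht; case: ifP => //; lia.
- by rewrite size_take size_drop ht; case: ifP => //; lia.
- by rewrite -e !cat_take_drop.
Qed.

Lemma envM (x p x' : seq M) d e u v m k : size x = m -> size p = k -> size x' = m ->
  let E := rcons (rcons x d) e ++ (p ++ x' ++ [:: u; v]) in
  [/\ map (nth 0 E) (iota 0 m) = x, map (nth 0 E) (iota (m + 2) k) = p,
      map (nth 0 E) (iota (m + 2 + k) m) = x', nth 0 E (m + 0) = d & nth 0 E (m + 1) = e] /\
  [/\ nth 0 E (m + 2 + k + m) = u, nth 0 E (m + 2 + k + m + 1) = v,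
      forall i, (i < m)%N -> nth 0 E i = nth 0 x i &
      forall i, (i < m)%N -> nth 0 E (m + 2 + k + i) = nth 0 x' i].
Proof.
move=> hx hp hx' E.
have eE : E = x ++ [:: d; e] ++ p ++ x' ++ [:: u; v] by rewrite /E -!cats1 -!catA.
have eE2 : E = (x ++ [:: d; e]) ++ p ++ (x' ++ [:: u; v]) by rewrite eE !catA.
have eE3 : E = (x ++ [:: d; e] ++ p) ++ x' ++ [:: u; v] by rewrite eE !catA.
have eE4 : E = (x ++ [:: d; e] ++ p ++ x') ++ [:: u; v] by rewrite eE !catA.
have sz2 : size (x ++ [:: d; e]) = (m + 2)%N by rewrite size_cat hx.
have sz3 : size (x ++ [:: d; e] ++ p) = (m + 2 + k)%N by rewrite !size_cat hx hp /=; lia.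
have sz4 : size (x ++ [:: d; e] ++ p ++ x') = (m + 2 + k + m)%N by rewrite !size_cat hx hp hx' /=; lia.
split; split.
- by rewrite eE map_nth_pre.
- by rewrite eE2 map_nth_mid.
- by rewrite eE3 map_nth_mid.
- by rewrite eE nth_catr.
- by rewrite eE nth_catr.
- by rewrite eE4 (nth_catr' _ sz4 (i := 0)) //; lia.
- by rewrite eE4 (nth_catr' _ sz4 (i := 1)) //; lia.
- by move=> i hi; rewrite eE nth_catl ?hx.
- by move=> i hi; rewrite eE3 (nth_catr' _ sz3 (i := i)) // nth_catl ?hx'.
Qed.
End Env2.

Section Main.
Variables (M : zmodType) (lt : rel M) (def : nat -> (seq M -> Prop) -> Prop).
Hypotheses (hog : ordered_group lt) (hex : expansion lt def).
Variables (m k : nat) (C P : seq M -> Prop) (f : seq M -> seq M -> M).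
Hypotheses (hC : def m C) (hP : def k P)
  (hf : def (m + k + 1)%N (fun s => exists x p, C x /\ P p /\ s = x ++ p ++ [:: f x p])).

Lemma graph_inv x p u : size x = m -> size p = k ->
  (exists x0 p0, C x0 /\ P p0 /\ x ++ p ++ [:: u] = x0 ++ p0 ++ [:: f x0 p0]) ->
  [/\ C x, P p & u = f x p].
Proof.
move=> hx hp [x0 [p0 [hx0 [hp0 e]]]].
have s0 := def_size hex hC hx0; have s1 := def_size hex hP hp0.
case: (cat_inj _ e); first by rewrite hx s0.
move=> e1 e2; subst x0; case: (cat_inj _ e2); first by rewrite hp s1.
by move=> e3 [e4]; subst.
Qed.

Definition Sbad e (s : seq M) := exists x d, s = rcons x d /\ C x /\ exists p x', P p /\ C x' /\
  lt (tnorm lt (tsub x x')) d /\ ~ lt (gabs lt (f x p - f x' p)) e.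

Lemma def_Sbad e : def m.+1 (Sbad e).
Proof.
pose N := (m.+2 + (k + m + 2))%N.
have hall : forall a b, (a + b <= N)%N -> all (fun i => i < N)%N (iota a b).
  by move=> a b h; apply/allP => i; rewrite mem_iota => /andP [h1 h2]; lia.
have c1 : def N (fun s => size s = N /\ C (map (nth 0 s) (iota 0 m))).
  by apply: (def_subst hex hC); [rewrite size_iota | apply: hall; rewrite /N; lia].
have c2 : def N (fun s => size s = N /\ P (map (nth 0 s) (iota (m + 2) k))).
  by apply: (def_subst hex hP); [rewrite size_iota | apply: hall; rewrite /N; lia].
have c3 : def N (fun s => size s = N /\ C (map (nth 0 s) (iota (m + 2 + k) m))).
  by apply: (def_subst hex hC); [rewrite size_iota | apply: hall; rewrite /N; lia].
have c4 : def N (fun s => size s = N /\ lt (nth 0 s (m + 1)%N) (nth 0 s (m + 1)%N + nth 0 s (m + 0)%N)).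
  by apply: (def_ltadd hex); rewrite /N; lia.
have c5 : def N (fun s => size s = N /\ forall i, (i < m)%N ->
    lt (nth 0 s i) (nth 0 s (m + 2 + k + i)%N + nth 0 s (m + 0)%N) /\
    lt (nth 0 s (m + 2 + k + i)%N) (nth 0 s i + nth 0 s (m + 0)%N)).
  apply: (def_bigand hex) => i hi.
  have a1 : def N (fun s => size s = N /\ lt (nth 0 s i) (nth 0 s (m + 2 + k + i)%N + nth 0 s (m + 0)%N)).
    by apply: (def_ltadd hex); rewrite /N; lia.
  have a2 : def N (fun s => size s = N /\ lt (nth 0 s (m + 2 + k + i)%N) (nth 0 s i + nth 0 s (m + 0)%N)).
    by apply: (def_ltadd hex); rewrite /N; lia.
  apply: (def_ext (def_and hex a1 a2)) => s; split; first by case=> -[? ?] [? ?].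
  by case=> ? [? ?].
have c6 : def N (fun s => size s = N /\ (exists x p, C x /\ P p /\
    map (nth 0 s) (iota 0 m ++ iota (m + 2) k ++ [:: (m + 2 + k + m)%N]) = x ++ p ++ [:: f x p])).
  apply: (def_subst hex hf); first by rewrite !size_cat !size_iota /=; lia.
  rewrite !all_cat /= !hall /N //; lia.
have c7 : def N (fun s => size s = N /\ (exists x p, C x /\ P p /\
    map (nth 0 s) (iota (m + 2 + k) m ++ iota (m + 2) k ++ [:: (m + 2 + k + m + 1)%N]) = x ++ p ++ [:: f x p])).
  apply: (def_subst hex hf); first by rewrite !size_cat !size_iota /=; lia.
  rewrite !all_cat /= !hall /N //; lia.
have c8 := def_not hex (def_and hex
  (def_ltadd hex (n := N) (i := (m + 2 + k + m)%N) (j := (m + 2 + k + m + 1)%N) (k := (m + 1)%N) ltac:(rewrite /N; lia) ltac:(rewrite /N; lia) ltac:(rewrite /N; lia))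
  (def_ltadd hex (n := N) (i := (m + 2 + k + m + 1)%N) (j := (m + 2 + k + m)%N) (k := (m + 1)%N) ltac:(rewrite /N; lia) ltac:(rewrite /N; lia) ltac:(rewrite /N; lia))).
have q := def_exn hex (n := m.+2) (j := (k + m + 2)%N)
  (def_and hex c1 (def_and hex c2 (def_and hex c3 (def_and hex c4
    (def_and hex c5 (def_and hex c6 (def_and hex c7 c8))))))).
have q2 := def_fixc hex e q.
apply: (def_ext q2) => s; split.
  case=> t [ht [[hsz H1] [[_ H2] [[_ H3] [[_ H4] [[_ H5] [[_ H6] [[_ H7] [_ H8]]]]]]]]].
  have hs : size s = m.+1 by move: hsz; rewrite size_cat size_rcons ht /N; lia.
  case/lastP: s hs hsz H1 H2 H3 H4 H5 H6 H7 H8 => [//|x d] hs hsz H1 H2 H3 H4 H5 H6 H7 H8.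
  have hx : size x = m by move: hs; rewrite size_rcons => -[].
  case: (split3 ht) => p [x' [u [v [hp hx' et]]]]; subst t.
  have [[E1 E2 E3 E4 E5] [E6 E7 E8 E9]] := envM d e u v hx hp hx'.
  rewrite E1 in H1; rewrite E2 in H2; rewrite E3 in H3; rewrite E4 E5 in H4.
  rewrite !map_cat /= E1 E2 E6 in H6; rewrite !map_cat /= E3 E2 E7 in H7.
  rewrite E5 E6 E7 in H8.
  have [_ _ eu] := graph_inv hx hp H6.
  have [_ _ ev] := graph_inv hx' hp H7.
  subst u v.
  exists x, d; split => //; split => //; exists p, x'; split => //; split => //.
  split.
    apply/(tnorm_tsub_lt hog); first by rewrite hx hx'.
    split; first by move: H4; rewrite -[X in lt X _](addr0 e) (ltD2l hog).
    move=> i hi; have := H5 i; rewrite hx in hi; move/(_ hi).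
    by rewrite E8 // E9 // E4 => -[a1 a2]; apply/(gabs_lt hog); split.
  by move/(gabs_lt hog) => [a1 a2]; apply: H8; split; split.
case=> x [d [-> [hxC [p [x' [hpP [hx'C [hn hbad]]]]]]]].
have hx := def_size hex hC hxC; have hp := def_size hex hP hpP.
have hx' := def_size hex hC hx'C.
exists (p ++ x' ++ [:: f x p; f x' p]); split; first by rewrite !size_cat hp hx' /=; lia.
have [[E1 E2 E3 E4 E5] [E6 E7 E8 E9]] := envM d e (f x p) (f x' p) hx hp hx'.
have hsz : size (rcons (rcons x d) e ++ p ++ x' ++ [:: f x p; f x' p]) = N.
  by rewrite !size_cat !size_rcons hx hp hx' /N /=; lia.
have [hd hn'] : lt 0 d /\ forall i, (i < size x)%N -> lt (gabs lt (nth 0 x i - nth 0 x' i)) d.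
  by apply/(tnorm_tsub_lt hog) => //; rewrite hx hx'.
rewrite !map_cat /= E1 E2 E3 E4 E5 E6 E7 hsz.
split; first by split.
split; first by split.
split; first by split.
split; first by split => //; rewrite -[X in lt X _](addr0 e) (ltD2l hog).
split.
  split => // i hi; rewrite E8 // E9 //.
  by apply/(gabs_lt hog); apply: hn'; rewrite hx.
split; first by split => //; exists x, p.
split; first by split => //; exists x', p.
split => // -[[_ a1] [_ a2]]; apply: hbad; apply/(gabs_lt hog); by split.
Qed.

End Main.

Unset Implicit Arguments.


Theorem proposition2p7 (M : zmodType) (lt : rel M)
    (def : nat -> (seq M -> Prop) -> Prop)
    (hog : ordered_group lt) (hex : expansion lt def)
    (hdc : definably_complete lt def)
    (m k : nat) (C P : seq M -> Prop) (f : seq M -> seq M -> M)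
    (hC : def m C) (hP : def k P)
    (hCc : closed_set lt m C) (hCb : bounded_set lt C)
    (hf : def (m + k + 1)%N
            (fun s => exists x p, C x /\ P p /\ s = x ++ p ++ [:: f x p])) :
  equi_continuous lt C P f <-> uniformly_equi_continuous lt C P f.
Proof.
split; last first.
  move=> hU e he x hx; have [d [hd hdP]] := hU e he.
  by exists d; split => // p x' hp hx' hl; apply: hdP.
move=> hE e he; apply: NNPP => hn.
have hbad : forall d, lt 0 d -> exists x d', d' = d /\ Sbad lt C P f e (rcons x d').
  move=> d hd; apply: NNPP => hn2; apply: hn; exists d; split => // p x x' hp hx hx' hl.
  apply: NNPP => hn3; apply: hn2; exists x, d; split => //; exists x, d; split => //.
  split => //; exists p, x'; by split.
have hCs : forall x, C x -> size x = m by move=> x hx; exact: (def_size hex hC hx).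
have hSbad : forall x d, Sbad lt C P f e (rcons x d) -> C x /\ exists p x', P p /\ C x' /\
    lt (tnorm lt (tsub x x')) d /\ ~ lt (gabs lt (f x p - f x' p)) e.
  move=> x d [x0 [d0 [e0 H]]]; case/rcons_inj: e0 => -> ->; exact: H.
case: hCb => B hB.
have hb : forall x d, Sbad lt C P f e (rcons x d) -> forall i, (i < m)%N ->
    ~~ lt B (gabs lt (nth 0 x i)).
  move=> x d /hSbad [hx _] i hi; have := hB x hx; rewrite le_ofE // => h.
  have := tnorm_ge hog (x := x) (i := i); rewrite hCs // => /(_ hi) h2.
  by have := le_trans hog h2 h.
have hne : forall d, lt 0 d -> exists x, Sbad lt C P f e (rcons x d).
  by move=> d hd; have [x [d' [-> hs]]] := hbad d hd; exists x.
have [z [hz hzP]] := limit hog hex hdc (def_Sbad hog hex hC hP hf e) hb hne.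
have hzC : C z.
  apply: NNPP => hzC; have [e0 [he0 hfar]] := hCc z hz hzC.
  have [x [d' [_ _ hs hc]]] := hzP e0 he0 e0 he0.
  have [hxC _] := hSbad _ _ hs.
  apply: (hfar x (hCs _ hxC) _ hxC).
  apply/(tnorm_tsub_lt hog); first by rewrite hz hCs.
  split => // i hi; apply: (gabs_sym hog); apply: hc; by rewrite -hz.
have [e' [he' he'e]] := half_pos hog he.
have [dl [hdl hdlP]] := hE e' he' z hzC.
have [dl' [hdl' hdl'dl]] := half_pos hog hdl.
have hle : ~~ lt dl dl'.
  by have := lt_asym hog (lt_le_trans hog (ltDpos hog dl' hdl') hdl'dl).
have [x [d' [hd' hd'le hs hc]]] := hzP dl' hdl' dl' hdl'.
have [hxC [p [x' [hp [hx'C [hl hbd]]]]]] := hSbad _ _ hs.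
apply: hbd.
have hsx := hCs _ hxC; have hsx' := hCs _ hx'C.
have [_ hl'] : lt 0 d' /\ forall i, (i < size x)%N -> lt (gabs lt (nth 0 x i - nth 0 x' i)) d'.
  by apply/(tnorm_tsub_lt hog) => //; rewrite hsx hsx'.
have A : lt (gabs lt (f z p - f x p)) e'.
  apply: hdlP => //; apply/(tnorm_tsub_lt hog); first by rewrite hz hsx.
  split => // i hi; rewrite hz in hi.
  by have := lt_le_trans hog (gabs_sym hog (hc i hi)) hle.
have Bq : lt (gabs lt (f z p - f x' p)) e'.
  apply: hdlP => //; apply/(tnorm_tsub_lt hog); first by rewrite hz hsx'.
  split => // i hi; rewrite hz in hi.
  have hix : (i < size x)%N by rewrite hsx.
  have h1 := gabs_tri hog (gabs_sym hog (hc i hi)) (hl' i hix).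
  have h2 : ~~ lt (dl' + dl') (dl' + d') by rewrite (ltD2l hog).
  by have := lt_le_trans hog (lt_le_trans hog h1 h2) hdl'dl.
have := gabs_tri hog (gabs_sym hog A) Bq.
by move=> h; have := lt_le_trans hog h he'e.
Qed.
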